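(* Fix a constant $h>0$. Consider a round $r$ in which every agent has a non-null adoption, i.e. $Z_0(r-1)=0$, so that $M=Nh\log N$ tokens are disseminated, of which $M_k=Z_k(r-1)\,h\log N$ carry arm $a_k$. Suppose the final positions of the tokens are independent and each token ends at each given agent $i$ with probability in $\left[\frac1N-\frac1{N^3},\frac1N+\frac1{N^3}\right]$, and agent $i$ sets $a_i(r)$ to the value of a uniformly random token among those ending at $i$ (and $a_i(r)=0$ if none). Then there is a sequence $\epsilon_N\to0$ (depending only on $N$ and $h$) such that for every agent $i$, every $k\in\{1,\dots,K\}$ and every such adoption profile $\mathcal X(r-1)$, $$\bigl|\mathbb P(a_i(r)=a_k\mid \mathcal X(r-1))-Q_k(r-1)\bigr|\le \epsilon_N\,Q_k(r-1);$$ in particular $\lim_{N\to\infty}\mathbb P(a_i(r)=a_k\mid\mathcal X(r-1))=Q_k(r-1)$.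
   Context: $N$ agents, $K$ arms. Each agent $i$ has adoption $\omega_i(r)\in\{0,1,\dots,K\}$ after round $r$ ($0$ means no preference). $Z_k(r)=|\{i:\omega_i(r)=k\}|$, $Q_k(r)=Z_k(r)/N$, and $\mathcal X(r)$ denotes the full adoption profile $(\omega_1(r),\dots,\omega_N(r))$. In the disseminating stage of round $r$, every agent with non-null adoption emits $h\log N$ tokens each carrying its current adoption. *)

(* Defs.v *)
From HB Require Import structures.
From mathcomp Require Import all_boot all_order all_algebra.
From mathcomp Require Import all_classical all_reals all_analysis.
Set Implicit Arguments. Unset Strict Implicit. Unset Printing Implicit Defensive.
Import Order.TTheory GRing.Theory Num.Theory.
Local Open Scope ring_scope.

(* Tokens of the disseminating stage: agent i' emits T tokens, token (i', t)
   carries the adoption omega i' of its emitter.  Arms a_1..a_K are encoded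
   as 'I_K (arm a_{k+1} <-> k : 'I_K); since every agent has a non-null
   adoption (Z_0(r-1) = 0), the profile is a map omega : 'I_N -> 'I_K. *)
Definition token (N T : nat) := ('I_N * 'I_T)%type.

Definition placement_prob (R : realType) (N T : nat)
  (p : token N T -> 'I_N -> R) (f : {ffun token N T -> 'I_N}) : R :=
  \prod_(j : token N T) p j (f j).

Definition pick_prob (R : realType) (N K T : nat) (omega : 'I_N -> 'I_K)
  (f : {ffun token N T -> 'I_N}) (i : 'I_N) (k : 'I_K) : R :=
  let n_i := #|[set j : token N T | f j == i]| in
  let n_ik := #|[set j : token N T | (f j == i) && (omega j.1 == k)]| in
  if n_i == 0%N then 0 else n_ik%:R / n_i%:R.

Definition adopt_prob (R : realType) (N K T : nat) (omega : 'I_N -> 'I_K)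
  (p : token N T -> 'I_N -> R) (i : 'I_N) (k : 'I_K) : R :=
  \sum_(f : {ffun token N T -> 'I_N})
     placement_prob p f * pick_prob R omega f i k.

Definition Qfrac (R : realType) (N K : nat) (omega : 'I_N -> 'I_K) (k : 'I_K) : R :=
  #|[set i' : 'I_N | omega i' == k]|%:R / N%:R.

(* Main.v *)
Require Import Defs.
From HB Require Import structures.
From mathcomp Require Import all_boot all_order all_algebra.
From mathcomp Require Import all_classical all_reals all_analysis.
From mathcomp Require Import lra fingroup perm.
Import Order.TTheory GRing.Theory Num.Theory.
Local Open Scope ring_scope.

Lemma card_sum (R : realType) (U : finType) (P : pred U) :
  (#|[set x | P x]|%:R : R) = \sum_x (P x)%:R.
Proof.
rewrite -sum1_card natr_sum big_mkcond /=; apply: eq_bigr => x _.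
by rewrite inE; case: (P x).
Qed.

Lemma prod2 (R : realType) (U : finType) (F : U -> R) j j' : j != j' ->
  \prod_x F x = F j * F j' * \prod_(x | (x != j) && (x != j')) F x.
Proof.
move=> Hne; rewrite (bigD1 j) //= (bigD1 j') /=; last by rewrite eq_sym.
by rewrite mulrA.
Qed.

Lemma bern (R : realType) (x : R) n : 0 <= x <= 1 ->
  (1 - x) ^+ n * (1 + n%:R * x) <= 1.
Proof.
move=> /andP[x0 x1]; elim: n => [|n IH]; first by rewrite expr0 mul0r addr0 mulr1.
rewrite exprSr -mulrA.
have h0 : 0 <= (1 - x) ^+ n by apply: exprn_ge0; lra.
apply: le_trans IH; apply: ler_wpM2l => //.
have n0 : (0:R) <= n%:R by []. have := mulr_ge0 (mulr_ge0 x0 x0) n0. rewrite -natr1; nra.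
Qed.

Section S.
Variables (R : realType) (N T : nat) (p : token N T -> 'I_N -> R) (i : 'I_N).
Local Notation tok := (token N T).

Definition ni (f : {ffun tok -> 'I_N}) := #|[set j : tok | f j == i]|.
Definition g (j : tok) f : R := if ni f == 0%N then 0 else (f j == i)%:R / (ni f)%:R.
Definition G j := \sum_f placement_prob p f * g j f.

Lemma pick_sum K (omega : 'I_N -> 'I_K) k f :
  pick_prob R omega f i k = \sum_(j | omega j.1 == k) g j f.
Proof.
rewrite /pick_prob /g /= -/(ni f); case: eqP => H; first by rewrite big1.
rewrite -mulr_suml card_sum [X in _ = X / _]big_mkcond /=; congr (_ / _).
by apply: eq_bigr => j _; case: (f j == i); case: (omega j.1 == k).
Qed.

Lemma adopt_sum K (omega : 'I_N -> 'I_K) k :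
  adopt_prob omega p i k = \sum_(j | omega j.1 == k) G j.
Proof.
rewrite /adopt_prob; under eq_bigr do rewrite pick_sum mulr_sumr.
by rewrite exchange_big.
Qed.

Lemma g_ge0 j f : 0 <= g j f.
Proof. by rewrite /g; case: ifP => // _; apply: divr_ge0. Qed.

Lemma sum_g f : \sum_j g j f = (ni f != 0%N)%:R.
Proof.
rewrite /g; case: eqP => H; first by rewrite big1.
rewrite -mulr_suml -(@card_sum _ _ (fun j => f j == i)) -/(ni f) divff //.
by rewrite pnatr_eq0; apply/eqP.
Qed.

Lemma ni0 f : ((ni f == 0%N)%:R : R) = \prod_j (f j != i)%:R.
Proof.
case: (boolP [exists j, f j == i]) => [/existsP [j Hj]| /existsP Hn].
  have -> : (ni f == 0%N) = false.
    apply/negbTE; rewrite /ni cards_eq0; apply/set0Pn; exists j; by rewrite inE.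
  by rewrite (bigD1 j) //= Hj mul0r.
have Hn' : forall j, f j != i by move=> j; apply/negP => H; apply: Hn; exists j.
have -> : (ni f == 0%N).
  rewrite /ni cards_eq0; apply/eqP/setP => j; rewrite !inE; exact/negbTE.
by rewrite big1 // => j _; rewrite Hn'.
Qed.

Hypothesis Hs : forall j, \sum_x p j x = 1.

Lemma sum_pl : \sum_f placement_prob p f = 1.
Proof.
rewrite /placement_prob -(bigA_distr_bigA (fun j x => p j x)).
by rewrite big1 // => j _; apply: Hs.
Qed.

Lemma sum_pl0 : \sum_f placement_prob p f * (ni f == 0%N)%:R = \prod_j (1 - p j i).
Proof.
rewrite (eq_bigr (fun f : {ffun token N T -> 'I_N} => \prod_j (p j (f j) * (f j != i)%:R))); last first.
  by move=> f _; rewrite ni0 /placement_prob -big_split.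
rewrite -(bigA_distr_bigA (fun j x => p j x * (x != i)%:R)).
apply: eq_bigr => j _; rewrite -[in RHS](Hs j) [in RHS](bigD1 i) //= addrAC subrr add0r.
rewrite (bigD1 i) //= eqxx mulr0 add0r.
by apply: eq_bigr => x Hx; rewrite Hx mulr1.
Qed.

Lemma sumG : \sum_j G j = 1 - \prod_j (1 - p j i).
Proof.
rewrite /G exchange_big /=.
under eq_bigr do rewrite -mulr_sumr sum_g.
have -> : \sum_f placement_prob p f * (ni f != 0%N)%:R =
   \sum_f (placement_prob p f - placement_prob p f * (ni f == 0%N)%:R).
  by apply: eq_bigr => f _; case: (ni f == 0%N); rewrite /= ?mulr0 ?mulr1 ?subr0 ?subrr.
by rewrite sumrB sum_pl sum_pl0.
Qed.


Lemma G_ge0 (Hp0 : forall j x, 0 <= p j x) j : 0 <= G j.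
Proof.
apply: sumr_ge0 => f _; apply: mulr_ge0; last exact: g_ge0.
by apply: prodr_ge0 => x _.
Qed.

Lemma swapG lo hi (Hlo : 0 <= lo) (Hp : forall j x, lo <= p j x <= hi) j j' :
  lo ^+ 2 * G j <= hi ^+ 2 * G j'.
Proof.
have Hp0 : forall j x, 0 <= p j x.
  by move=> j0 x; apply: le_trans Hlo _; case/andP: (Hp j0 x).
have lohi : lo <= hi by case/andP: (Hp j i) => a b; apply: le_trans b.
case: (eqVneq j j') => [<- | Hne].
  by apply: ler_wpM2r; [exact: G_ge0 | rewrite lerXn2r // ?nnegrE //; apply: le_trans lohi].
pose s := tperm j j'.
pose phi := fun f : {ffun tok -> 'I_N} => [ffun x => f (s x)].
have phiK : involutive phi.
  by move=> f; apply/ffunP => x; rewrite !ffunE tpermK.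
rewrite /G (reindex_inj (inv_inj phiK)) !mulr_sumr.
apply: ler_sum => f _.
have Hni : ni (phi f) = ni f.
  rewrite /ni -(card_preimset [set x | f x == i] (@perm_inj _ s)).
  by apply: eq_card => x; rewrite !inE ffunE.
have Hg : g j (phi f) = g j' f by rewrite /g Hni ffunE /s tpermL.
rewrite Hg mulrA [X in _ <= X]mulrA; apply: ler_wpM2r; first exact: g_ge0.
rewrite /placement_prob !(@prod2 _ _ _ _ _ Hne).
have -> : \prod_(x | (x != j) && (x != j')) p x (phi f x) =
          \prod_(x | (x != j) && (x != j')) p x (f x).
  apply: eq_bigr => x /andP[h1 h2]; rewrite ffunE /s tpermD // eq_sym //.
rewrite !ffunE /s tpermL tpermR.
have r0 : 0 <= \prod_(x | (x != j) && (x != j')) p x (f x) by apply: prodr_ge0.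
rewrite !mulrA; apply: ler_wpM2r => //.
rewrite -[lo ^+ 2 * _ * _]mulrA -[hi ^+ 2 * _ * _]mulrA; apply: (@le_trans _ _ (lo ^+ 2 * hi ^+ 2)).
  apply: ler_wpM2l; first exact: exprn_ge0.
  rewrite expr2; apply: ler_pM; [exact: Hp0|exact: Hp0|by case/andP: (Hp j (f j'))|by case/andP: (Hp j' (f j))].
rewrite mulrC; apply: ler_wpM2l; first by apply: exprn_ge0; apply: le_trans lohi.
rewrite expr2; apply: ler_pM => //; [by case/andP: (Hp j (f j))|by case/andP: (Hp j' (f j'))].
Qed.

End S.

Lemma numfin (R : realType) (x y d D : R) : 0 < x <= 1/4 -> 0 <= d <= D -> d <= 1 ->
  (1-x)^+2 * y <= (1+x)^+2 -> (1-x)^+2 * (1-d) <= (1+x)^+2 * y -> `|y - 1| <= 8*x + D.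
Proof.
move=> /andP[x0 x1] /andP[d0 dD] d1 up lo.
have a0 : 0 < (1-x)^+2 by apply: exprn_gt0; lra.
have b0 : 0 < (1+x)^+2 by apply: exprn_gt0; lra.
have e1 : (1+x)^+2 <= (1-x)^+2 * (1 + 8*x).
  rewrite !expr2; have := mulr_ge0 (ltW x0) (ltW x0); have := mulr_ge0 (mulr_ge0 (ltW x0) (ltW x0)) (ltW x0); nra.
have e2 : (1+x)^+2 * (1 - 8*x) <= (1-x)^+2.
  rewrite !expr2; have := mulr_ge0 (ltW x0) (ltW x0); have := mulr_ge0 (mulr_ge0 (ltW x0) (ltW x0)) (ltW x0); nra.
have yu : y <= 1 + 8*x.
  by rewrite -(ler_pM2l a0); apply: le_trans up e1.
have yl : (1 - 8*x) * (1 - d) <= y.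
  rewrite -(ler_pM2l b0) mulrA; apply: le_trans lo.
  by apply: ler_wpM2r; lra.
have xd : 0 <= x * d by apply: mulr_ge0; lra.
rewrite ler_norml; apply/andP; split; nra.
Qed.

Local Open Scope classical_set_scope.
Local Open Scope ring_scope.

Lemma eps_cvg (R : realType) (h : R) (hpos : 0 < h) :
  (8 / (n%:R : R) ^+ 2 + 2 / (2 + h * ln (n%:R : R))) @[n --> \oo] --> 0.
Proof.
apply/cvgr0Pnorm_le => e e0.
pose c := Num.max (Num.max (16 / e) 1) (expR (4 / (e * h))).
near=> n.
have Hn : c < n%:R by near: n; apply: nbhs_infty_gtr.
have [H1 H2 H3] : [/\ 16 / e < n%:R, 1 < (n%:R : R) & expR (4 / (e * h)) < n%:R].
  by move: Hn; rewrite /c !gt_max => /andP[/andP[-> ->] ->].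
have n0 : (0 : R) < n%:R by lra.
have L : 4 / (e * h) < ln (n%:R : R).
  by move: H3; rewrite -ltr_ln ?posrE ?expR_gt0 // expRK.
rewrite ltr_pdivrMr ?mulr_gt0 // in L.
rewrite ltr_pdivrMr // in H1.
have lnpos : 0 < ln (n%:R : R) by apply: ln_gt0.
have a1 : 8 / (n%:R : R) ^+ 2 <= e / 2.
  rewrite ler_pdivrMr ?exprn_gt0 //.
  have : (n%:R : R) <= n%:R ^+ 2 by rewrite expr2; nra.
  nra.
have a2 : 2 / (2 + h * ln (n%:R : R)) <= e / 2.
  rewrite ler_pdivrMr; last by have := mulr_gt0 hpos lnpos; lra.
  nra.
rewrite ger0_norm; first lra.
apply: addr_ge0; first by apply: divr_ge0 => //; apply: exprn_ge0; lra.
by apply: divr_ge0 => //; have := mulr_gt0 hpos lnpos; lra.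
Unshelve. all: by end_near.
Qed.

Theorem lemma1 (R : realType) (h : R) (hpos : 0 < h) :
  exists eps : nat -> R,
    eps n @[n --> \oo] --> 0 /\
    forall (N K T : nat),
      (* T = ceil (h log N) tokens emitted per agent *)
      T%:R - 1 < h * ln (N%:R : R) <= T%:R ->
      forall (omega : 'I_N -> 'I_K) (p : token N T -> 'I_N -> R),
        (forall j, \sum_(x : 'I_N) p j x = 1) ->
        (forall j x, N%:R^-1 - (N%:R ^+ 3)^-1 <= p j x <= N%:R^-1 + (N%:R ^+ 3)^-1) ->
        forall (i : 'I_N) (k : 'I_K),
          `| adopt_prob omega p i k - Qfrac R omega k | <= eps N * Qfrac R omega k.
Proof.
exists (fun n : nat => 8 / (n%:R : R) ^+ 2 + 2 / (2 + h * ln (n%:R : R))).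
split; first exact: eps_cvg.
move=> N K T /andP[HT1 HT2] omega p Hs Hp i k.
rewrite adopt_sum.
set Q := Qfrac R omega k.
have Q0 : 0 <= Q by rewrite /Q /Qfrac; apply: divr_ge0.
have N0 : (0 < N)%N := leq_ltn_trans (leq0n _) (ltn_ord i).
case N1: (N == 1%N).
  move/eqP: N1 => N1; subst N.
  rewrite ln1 mulr0 in HT1.
  have : (T%:R : R) < 1%:R by lra.
  rewrite ltr_nat ltnS leqn0 => /eqP T0; subst T.
  rewrite big1; last by move=> [a [m hm]]; exfalso; move: hm; rewrite ltn0.
  rewrite sub0r normrN ger0_norm // ln1 mulr0 addr0 expr1n divr1 divff //.
  nra.
have N2 : (1 < N)%N by rewrite ltn_neqAle eq_sym N1 N0.
have Nr : (2 : R) <= N%:R by rewrite ler_nat.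
set u := (N%:R : R)^-1.
have Nu : N%:R * u = 1 by rewrite /u divff // pnatr_eq0 -lt0n.
have u0 : 0 < u by rewrite /u invr_gt0 ltr0n.
have u2 : u <= 1/2 by nra.
set x := u ^+ 2.
have x0 : 0 < x by rewrite /x exprn_gt0.
have x1 : x <= 1/4 by rewrite /x expr2; nra.
set lo := u * (1 - x).
set hi := u * (1 + x).
have Hp' : forall j y, lo <= p j y <= hi.
  move=> j y; have := Hp j y; rewrite -exprVn -/u.
  have -> : u ^+ 3 = u * x by rewrite /x exprS.
  by rewrite /lo /hi mulrBr mulrDr mulr1.
have lo0 : 0 <= lo by rewrite /lo; apply: mulr_ge0; lra.
have hi1 : hi <= 1 by rewrite /hi; nra.
have Hp0 : forall j y, 0 <= p j y.
  by move=> j y; case/andP: (Hp' j y) => a _; apply: le_trans a.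
have lnN : 0 < ln (N%:R : R) by apply: ln_gt0; lra.
have H0 : 0 < h * ln (N%:R : R) by apply: mulr_gt0.
have T0 : (0 : R) < T%:R by lra.
set M := (N * T)%N.
have Mr : (M%:R : R) = N%:R * T%:R by rewrite /M natrM.
have cardtok : #|{: token N T}| = M by rewrite card_prod !card_ord.
set c := (M%:R : R)^-1.
have M0 : (0 : R) < M%:R by rewrite Mr; apply: mulr_gt0; lra.
have cM : c * M%:R = 1 by rewrite /c mulVf // gt_eqF.
have HQ : Q = \sum_(j : token N T | omega j.1 == k) c.
  rewrite /Q /Qfrac card_sum [RHS]big_mkcond /= -(pair_bigA _ (fun a b => if omega (a, b).1 == k then c else 0)) /=.
  rewrite mulr_suml; apply: eq_bigr => a _.
  rewrite sumr_const card_ord.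
  case: (omega a == k); last by rewrite mul0r mul0rn.
  rewrite /c Mr invfM -[_ *+ T]mulr_natr -mulrA mulVf ?mulr1 ?gt_eqF //.
  by rewrite /= mul1r.
rewrite HQ -sumrB; apply: le_trans (ler_norm_sum _ _ _) _.
rewrite mulr_sumr; apply: ler_sum => j _.
have sw := @swapG R N T p i lo hi lo0 Hp'.
set d := \prod_(j0 : token N T) (1 - p j0 i).
have sG : \sum_(j0 : token N T) G R N T p i j0 = 1 - d by apply: sumG.
have d0 : 0 <= d.
  by apply: prodr_ge0 => j0 _; case/andP: (Hp' j0 i) => _ b; lra.
have d1 : d <= (1 - lo) ^+ M.
  rewrite -cardtok -prodr_const; apply: ler_prod => j0 _.
  by case/andP: (Hp' j0 i) => a b; apply/andP; split; lra.
have bn := @bern R lo M.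
have Mlo : M%:R * lo = T%:R * (1 - x) by rewrite Mr /lo mulrA -(mulrA N%:R) (mulrC T%:R) mulrA Nu mul1r.
rewrite Mlo in bn.
have lo1 : lo <= 1 by rewrite /lo; nra.
have bn' : (1 - lo) ^+ M * (1 + T%:R * (1 - x)) <= 1 by apply: bn; lra.
have pw0 : 0 <= (1 - lo) ^+ M by apply: exprn_ge0; lra.
have dD : d <= 2 / (2 + h * ln (N%:R : R)).
  rewrite ler_pdivlMr; last lra.
  have : d * (2 + h * ln (N%:R : R)) <= (1 - lo) ^+ M * (2 + 2 * (T%:R * (1 - x))).
    apply: ler_pM => //; [lra| nra].
  nra.
have up : lo ^+ 2 * (M%:R * G R N T p i j) <= hi ^+ 2.
  have : \sum_(j' : token N T) lo ^+ 2 * G R N T p i j <= \sum_(j' : token N T) hi ^+ 2 * G R N T p i j'.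
    by apply: ler_sum => j' _; apply: sw.
  rewrite sumr_const cardtok -mulr_sumr sG => H.
  rewrite mulrA (mulrC _ M%:R) -mulrA mulr_natl; apply: le_trans H _.
  rewrite -[X in _ <= X]mulr1; apply: ler_wpM2l; [apply: exprn_ge0; rewrite /hi; apply: mulr_ge0; lra | lra].
have lw : lo ^+ 2 * (1 - d) <= hi ^+ 2 * (M%:R * G R N T p i j).
  have : \sum_(j' : token N T) lo ^+ 2 * G R N T p i j' <= \sum_(j' : token N T) hi ^+ 2 * G R N T p i j.
    by apply: ler_sum => j' _; apply: sw.
  rewrite (sumr_const _ (hi ^+ 2 * G R N T p i j)) cardtok -mulr_sumr sG => H.
  by apply: le_trans H _; rewrite -mulrnAr -mulr_natl.
have u20 : 0 < u ^+ 2 by apply: exprn_gt0.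
rewrite /lo /hi !exprMn in up lw.
rewrite -mulrA in up; rewrite -[u ^+ 2 * (1 - x) ^+ 2 * _]mulrA -[u ^+ 2 * (1 + x) ^+ 2 * _]mulrA in lw.
rewrite ler_pM2l // in up; rewrite ler_pM2l // in lw.
have := @numfin R x (M%:R * G R N T p i j) d (2 / (2 + h * ln (N%:R : R))).
have -> : 8 / (N%:R : R) ^+ 2 = 8 * x by rewrite /x /u exprVn.
move=> /(_ _ _ _ up lw) H; have {}H : `|M%:R * G R N T p i j - 1| <= 8 * x + 2 / (2 + h * ln (N%:R : R)).
  apply: H; [by apply/andP; split | by apply/andP; split; lra | ].
  have : 0 <= T%:R * (1 - x) by apply: mulr_ge0; lra.
  nra.
have -> : G R N T p i j - c = c * (M%:R * G R N T p i j - 1) by rewrite mulrBr mulrA cM mul1r mulr1.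
rewrite normrM (ger0_norm (ltW _)) ?invr_gt0 // mulrC.
by apply: ler_wpM2r => //; rewrite /c invr_ge0 ltW.
Qed.
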